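(* Let $n\in\mathbb{N}$. Every edge of $\Gamma_0(n)\cdot I$ is an edge of both $\mathcal{F}$ and $\frac1n\mathcal{F}$. Moreover, the set of edges $\Gamma_0(n)\cdot I$ equals the set of edges common to $\mathcal{F}$ and $\frac1n\mathcal{F}$ if and only if $n$ is a prime power.
   Context: The Farey tessellation $\mathcal{F}$ is the ideal triangulation of the upper half-plane with vertex set $\mathbb{Q}\cup\{\infty\}$ ($\infty=\frac10$) whose edges are the geodesics joining reduced fractions $\frac pq,\frac rs$ with $|ps-qr|=1$. $\frac1n\mathcal{F}$ is the image of $\mathcal{F}$ under $z\mapsto z/n$. $I$ is the geodesic from $0$ to $\infty$, $\Gamma_0(n)=\{\begin{pmatrix}a&b\\c&d\end{pmatrix}\in PSL_2(\mathbb{Z}): c\equiv0\pmod n\}$ acting by Möbius transformations, and $\Gamma_0(n)\cdot I=\{\phi(I):\phi\in\Gamma_0(n)\}$. (Prime powers include $n=p^\ell$ with $\ell\ge0$.) *)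

(* Defs.v *)
From HB Require Import structures.
From mathcomp Require Import all_boot all_order all_algebra.
Set Implicit Arguments. Unset Strict Implicit. Unset Printing Implicit Defensive.
Import Order.TTheory GRing.Theory Num.Theory.
Local Open Scope ring_scope.

(* Points of Q ∪ {∞}: [Some q] is the rational q, [None] is ∞ = 1/0. *)
Definition qpt := option rat.

Definition pnum (x : qpt) : int := if x is Some r then numq r else 1.
Definition pden (x : qpt) : int := if x is Some r then denq r else 0.

(* Edges of the Farey tessellation F: geodesics joining reduced fractions
   p/q and r/s with |ps - qr| = 1.  An edge {x,y} is encoded by the
   (symmetric) relation on ordered endpoint pairs. *)
Definition farey_edge (x y : qpt) : Prop :=
  `|pnum x * pden y - pden x * pnum y| = 1.

Definition divpt (n : nat) (x : qpt) : qpt :=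
  if x is Some r then Some (r / n%:R) else None.

Definition scaled_farey_edge (n : nat) (x y : qpt) : Prop :=
  exists u v, farey_edge u v /\ x = divpt n u /\ y = divpt n v.

Definition mobius (a b c d : int) (x : qpt) : qpt :=
  match x with
  | Some z => let den := c%:~R * z + d%:~R in
              if den == 0 then None else Some ((a%:~R * z + b%:~R) / den)
  | None => if c == 0 then None else Some (a%:~R / c%:~R)
  end.

(* Edges of Γ_0(n)·I: φ(I) for φ = (a b; c d), ad - bc = 1, n | c.
   φ(I) is the geodesic with endpoints φ(0) and φ(∞) (unordered). *)
Definition gamma0_edge (n : nat) (x y : qpt) : Prop :=
  exists a b c d : int,
    a * d - b * c = 1 /\ (n%:Z %| c)%Z /\
    ((x = mobius a b c d (Some 0) /\ y = mobius a b c d None) \/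
     (y = mobius a b c d (Some 0) /\ x = mobius a b c d None)).

(* Main.v *)
Require Import Defs.
From HB Require Import structures.
From mathcomp Require Import all_boot all_order all_algebra.
From mathcomp Require Import ring lra zify.
From Stdlib Require Import Classical.
Set Implicit Arguments. Unset Strict Implicit. Unset Printing Implicit Defensive.
Import Order.TTheory GRing.Theory Num.Theory.
Local Open Scope ring_scope.

Definition frac (p q : int) : qpt := if q == 0 then None else Some (p%:~R / q%:~R).

Lemma coprimez_abs p q : coprimez p q -> coprime `|p|%N `|q|%N.
Proof. by rewrite /coprimez /gcdz /coprime => /eqP [->]. Qed.

Lemma frac_rep p q : coprimez p q ->
  exists e : int, `|e| = 1 /\ pnum (frac p q) = e * p /\ pden (frac p q) = e * q.
Proof.
move=> /coprimez_abs cp; rewrite /frac.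
case: eqP => [q0|q0] /=.
  subst q; exists p; move: cp; rewrite /coprime gcdn0 => /eqP hp.
  have hp' : `|p| = 1 by rewrite -abszE hp.
  split => //; split; last by rewrite mulr0.
  by rewrite -expr2 -real_normK ?num_real // hp' expr1n.
exists (Num.sg q); split; first by rewrite normr_sg; move/eqP/negbTE: q0 => ->.
rewrite coprimeq_num // coprimeq_den //; split => //.
by move/eqP/negbTE: q0 => ->; rewrite normrEsg.
Qed.

Lemma pt_rep x : x = frac (pnum x) (pden x) /\ coprimez (pnum x) (pden x).
Proof.
case: x => [r|] /=; last by [].
rewrite /frac denq_eq0 /=; split; last by rewrite /coprimez /gcdz; have := coprime_num_den r; rewrite /coprime => /eqP ->.
by rewrite divq_num_den.
Qed.

Lemma frac_farey p q r s : coprimez p q -> coprimez r s ->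
  farey_edge (frac p q) (frac r s) <-> `|p * s - q * r| = 1.
Proof.
rewrite /farey_edge => /frac_rep [e [he [-> ->]]] /frac_rep [f [hf [-> ->]]].
have -> : e * p * (f * s) - e * q * (f * r) = (e * f) * (p * s - q * r) by ring.
by rewrite normrM normrM he hf mul1r.
Qed.

Lemma frac_scale k p q : k != 0 -> frac (k * p) (k * q) = frac p q.
Proof.
move=> k0; rewrite /frac mulf_eq0 (negbTE k0) /=; case: eqP => // /eqP q0.
by congr Some; rewrite !intrM; field; rewrite !intr_eq0 k0 q0.
Qed.

Lemma divpt_frac n p q : (0 < n)%N -> divpt n (frac p q) = frac p (q * n%:Z).
Proof.
move=> n0; rewrite /frac mulf_eq0.
have nz : (n%:Z == 0) = false by apply/negbTE; rewrite eqz_nat -lt0n.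
rewrite nz orbF; case: eqP => // /eqP q0 /=.
congr Some; rewrite intrM; field.
by rewrite intr_eq0 q0 pnatr_eq0 -lt0n n0.
Qed.

Lemma mobius0 a b c d : mobius a b c d (Some 0) = frac b d.
Proof. by rewrite /mobius /frac mulr0 add0r mulr0 add0r intr_eq0. Qed.

Lemma mobiusI a b c d : mobius a b c d None = frac a c.
Proof. by []. Qed.

Lemma frac_eq p q p' q' : frac p q = frac p' q' -> p * q' = p' * q.
Proof.
rewrite /frac; case: eqP => [->|/eqP q0]; case: eqP => [->|/eqP q0'] //=.
  by rewrite !mulr0.
by move=> [] /eqP; rewrite eqr_div ?intr_eq0 // -!intrM eqr_int => /eqP.
Qed.

Lemma frac_den_abs p q p' q' : coprimez p q -> coprimez p' q' ->
  frac p q = frac p' q' -> `|q| = `|q'|.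
Proof.
move=> /frac_rep [e [he [_ h1]]] /frac_rep [f [hf [_ h2]]] E.
have : `|pden (frac p q)| = `|pden (frac p' q')| by rewrite E.
by rewrite h1 h2 !normrM he hf !mul1r.
Qed.

Lemma det_coprime a b c d : a * d - b * c = 1 -> coprimez b d /\ coprimez a c.
Proof.
move=> h; split; apply/coprimezP.
  by exists (-c, a); rewrite /= -h; ring.
by exists (d, -b); rewrite /= -h; ring.
Qed.

Lemma farey_sym x y : farey_edge x y -> farey_edge y x.
Proof.
rewrite /farey_edge => h; rewrite -h -normrN; congr `|_|; ring.
Qed.

Lemma scaled_sym n x y : scaled_farey_edge n x y -> scaled_farey_edge n y x.
Proof. by move=> [u [v [h [-> ->]]]]; exists v, u; split => //; apply: farey_sym. Qed.

Lemma gamma0_sym n x y : gamma0_edge n x y -> gamma0_edge n y x.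
Proof. move=> [a [b [c [d [h1 [h2 h3]]]]]]; exists a, b, c, d; tauto. Qed.

Lemma part1_core n a b c d : (0 < n)%N -> a * d - b * c = 1 -> (n%:Z %| c)%Z ->
  farey_edge (frac b d) (frac a c) /\ scaled_farey_edge n (frac b d) (frac a c).
Proof.
move=> n0 h /dvdzP [k hk]; have [cbd cac] := det_coprime h.
have nz : n%:Z != 0 by rewrite eqz_nat -lt0n.
split.
  apply/frac_farey => //.
  have -> : b * c - d * a = -(a * d - b * c) by ring.
  by rewrite h normrN normr1.
exists (frac (n%:Z * b) d), (frac a k); split; last split.
- apply/frac_farey.
  + by apply/coprimezP; exists (-k, a); rewrite /= -h hk; ring.
  + by apply/coprimezP; exists (d, -b * n%:Z); rewrite /= -h hk; ring.
  have -> : n%:Z * b * k - d * a = -(a * d - b * c) by rewrite hk; ring.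
  by rewrite h normrN normr1.
- by rewrite divpt_frac // [d * _]mulrC frac_scale.
- by rewrite divpt_frac // -hk.
Qed.

Lemma part1 n x y : (0 < n)%N -> gamma0_edge n x y ->
  farey_edge x y /\ scaled_farey_edge n x y.
Proof.
move=> n0 [a [b [c [d [h1 [h2 [[-> ->]|[-> ->]]]]]]]];
  rewrite mobius0 mobiusI; have [f s] := part1_core n0 h1 h2 => //.
by split; [apply: farey_sym | apply: scaled_sym].
Qed.

Lemma coprimez_sym a b : coprimez a b -> coprimez b a.
Proof. by move/coprimezP => [[u v] /= h]; apply/coprimezP; exists (v, u); rewrite /= addrC. Qed.

Lemma pp_split P l a b : prime P -> (a * b = P ^ l)%N -> coprime a b ->
  a = 1%N \/ b = 1%N.
Proof.
move=> pP hab cab.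
have Pdv : forall m, (m %| P ^ l)%N -> m <> 1%N -> (P %| m)%N.
  move=> m hm m1.
  have m0 : (0 < m)%N.
    case: m hm {m1} => // ; rewrite dvd0n => /eqP h.
    by have := expn_gt0 P l; rewrite h (prime_gt0 pP).
  have m1' : (1 < m)%N by case: m m0 m1 hm => [|[|k]].
  have hq := pdiv_prime m1'.
  have : (pdiv m %| P ^ l)%N by apply: dvdn_trans (pdiv_dvd m) hm.
  rewrite Euclid_dvdX // => /andP [hqP _].
  by move: hqP; rewrite dvdn_prime2 // => /eqP <-; apply: pdiv_dvd.
case: (a =P 1%N) => [|a1]; first by left.
case: (b =P 1%N) => [|b1]; first by right.
have ha : (P %| a)%N by apply: Pdv a1; rewrite -hab dvdn_mulr.
have hb : (P %| b)%N by apply: Pdv b1; rewrite -hab dvdn_mull.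
have : (P %| gcdn a b)%N by rewrite dvdn_gcd ha hb.
by move: cab; rewrite /coprime => /eqP ->; rewrite dvdn1 => /eqP h; move: (prime_gt1 pP); rewrite h.
Qed.

Lemma build n p q r s : coprimez p q -> coprimez r s -> `|p * s - q * r| = 1 ->
  (n%:Z %| s)%Z -> gamma0_edge n (frac p q) (frac r s).
Proof.
move=> cpq crs he hn; set e := p * s - q * r in he.
have ee : e * e = 1 by rewrite -expr2 -real_normK ?num_real // he expr1n.
have e0 : (- e) != 0 by rewrite oppr_eq0; apply/eqP => h; move: he; rewrite h normr0.
exists ((- e) * r), p, ((- e) * s), q; split; last split.
- by rewrite -ee /e; ring.
- by apply: dvdz_mull.
- by left; rewrite mobius0 mobiusI frac_scale.
Qed.

Lemma coprimez00 : ~~ coprimez 0 0.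
Proof. by []. Qed.

Lemma scale_div n p q P1 Q1 : (0 < n)%N -> coprimez p q -> coprimez P1 Q1 -> q != 0 ->
  p * (Q1 * n%:Z) = P1 * q ->
  Q1 != 0 /\ exists t, q = t * Q1 /\ n%:Z * p = P1 * t.
Proof.
move=> n0 cpq cPQ q0 h.
have nz : n%:Z != 0 by rewrite eqz_nat -lt0n.
have Q0 : Q1 != 0.
  apply/eqP => Q0; move: h; rewrite Q0 mul0r mulr0 => /esym/eqP.
  rewrite mulf_eq0 (negbTE q0) orbF => /eqP P0.
  by move: cPQ; rewrite P0 Q0.
split => //.
have : (Q1 %| P1 * q)%Z by rewrite -h mulrA dvdz_mulr // dvdz_mull.
rewrite Gauss_dvdzr; last exact: coprimez_sym.
move=> /dvdzP [t ht]; exists t; split => //.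
apply/eqP; rewrite -subr_eq0; apply/eqP.
have : (n%:Z * p - P1 * t) * Q1 = 0.
  have -> : (n%:Z * p - P1 * t) * Q1 = p * (Q1 * n%:Z) - P1 * (t * Q1) by ring.
  by rewrite h -ht subrr.
by move/eqP; rewrite mulf_eq0 (negbTE Q0) orbF => /eqP.
Qed.

Lemma part2 n P l x y : (0 < n)%N -> prime P -> n = (P ^ l)%N ->
  farey_edge x y -> scaled_farey_edge n x y -> gamma0_edge n x y.
Proof.
move=> n0 pP hn.
have [ex cx] := pt_rep x; have [ey cy] := pt_rep y.
move: ex ey cx cy; move: (pnum x) (pden x) (pnum y) (pden y) => p q r s -> -> cx cy.
move=> /frac_farey -/(_ cx cy) hD [u [v [huv [hx hy]]]].
move: huv hx hy; have [eu cu] := pt_rep u; have [ev cv] := pt_rep v.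
move: eu ev cu cv; move: (pnum u) (pden u) (pnum v) (pden v) => P1 Q1 R1 S1 -> -> cu cv.
move=> /frac_farey -/(_ cu cv) hD1; rewrite !divpt_frac // => /frac_eq hx /frac_eq hy.
suff : (n%:Z %| s)%Z \/ (n%:Z %| q)%Z.
  case=> h; first exact: build.
  apply: gamma0_sym; apply: build => //.
  by rewrite -hD -normrN; congr `|_|; ring.
case: (q =P 0) => [->|/eqP q0]; first by right; exact: dvdz0.
case: (s =P 0) => [->|/eqP s0]; first by left; exact: dvdz0.
have [Q0 [t [ht1 ht2]]] := scale_div n0 cx cu q0 hx.
have [S0 [t' [ht1' ht2']]] := scale_div n0 cy cv s0 hy.
have key : n%:Z * (p * s - q * r) = t * t' * (P1 * S1 - Q1 * R1).
  have -> : n%:Z * (p * s - q * r) = (n%:Z * p) * s - q * (n%:Z * r) by ring.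
  by rewrite ht2 ht2' ht1 ht1'; ring.
have habs : n = (`|t| * `|t'|)%N.
  have : `|n%:Z * (p * s - q * r)| = `|t * t' * (P1 * S1 - Q1 * R1)| by rewrite key.
  rewrite !normrM hD hD1 !mulr1 => /eqP.
  by rewrite -!abszE -PoszM eqz_nat => /eqP.
have ctt : coprimez t t'.
  apply/coprimezP; set e := p * s - q * r.
  have ee : e * e = 1 by rewrite -expr2 -real_normK ?num_real // hD expr1n.
  exists (- e * r * Q1, e * p * S1) => /=.
  have -> : - e * r * Q1 * t + e * p * S1 * t' = e * (p * (t' * S1) - (t * Q1) * r) by ring.
  by rewrite -ht1 -ht1'.
have := pp_split pP (etrans (esym habs) hn) (coprimez_abs ctt).
case=> h1.
- left; rewrite ht1' dvdzE abszM; apply: dvdn_mulr.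
  by rewrite /= habs h1 mul1n.
- right; rewrite ht1 dvdzE abszM; apply: dvdn_mulr.
  by rewrite /= habs h1 muln1.
Qed.

Lemma notpp n : (0 < n)%N -> ~ (exists p l : nat, prime p /\ n = (p ^ l)%N) ->
  exists a b : nat, [/\ (1 < a)%N, (1 < b)%N, coprime a b & n = (a * b)%N].
Proof.
move=> n0 hpp.
have n1 : (1 < n)%N.
  case: n n0 hpp => [|[|k]] // _ h; exfalso; apply: h; exists 2%N, 0%N; split => //.
set P := pdiv n.
exists (n`_P)%N, (n`_P^')%N; split.
- by rewrite p_part_gt1 /P pi_pdiv.
- case: (ltnP 1 (n`_P^')%N) => // hb; exfalso; apply: hpp.
  exists P, (logn P n); split; first exact: pdiv_prime.
  have b1 : (n`_P^')%N = 1%N by have := part_gt0 P^' n; lia.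
  by rewrite -p_part -{1}(partnC P n0) b1 muln1.
- exact: coprime_partC.
- by rewrite partnC.
Qed.

Lemma counter n a b : (1 < a)%N -> (1 < b)%N -> coprime a b -> n = (a * b)%N ->
  ~ (forall x y : qpt,
      gamma0_edge n x y <-> (farey_edge x y /\ scaled_farey_edge n x y)).
Proof.
move=> a1 b1 cab hn H.
have n0 : (0 < n)%N by rewrite hn muln_gt0; apply/andP; split; lia.
have [u [v huv]] := Bezoutz a%:Z b%:Z.
have g1 : gcdz a%:Z b%:Z = 1 by rewrite /gcdz /=; move: cab; rewrite /coprime => /eqP ->.
rewrite g1 in huv.
set U := v; set V := - u.
have hUV : U * b%:Z - a%:Z * V = 1 by rewrite /U /V -huv; ring.
have cUa : coprimez U a%:Z by apply/coprimezP; exists (b%:Z, - V); rewrite /= -hUV; ring.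
have cVb : coprimez V b%:Z by apply/coprimezP; exists (- a%:Z, U); rewrite /= -hUV; ring.
have c1 : forall z, coprimez z 1 by move=> z; apply/coprimezP; exists (0, 1); rewrite /=; ring.
have a0 : a%:Z != 0 by rewrite eqz_nat; lia.
have b0 : b%:Z != 0 by rewrite eqz_nat; lia.
have [_ /(_ (conj _ _)) G] := H (frac U a%:Z) (frac V b%:Z).
have {G} G : gamma0_edge n (frac U a%:Z) (frac V b%:Z).
  apply: G; first by apply/frac_farey => //; rewrite hUV normr1.
  exists (frac (b%:Z * U) 1), (frac (a%:Z * V) 1); split; last split.
  - apply/frac_farey => //.
    have -> : b%:Z * U * 1 - 1 * (a%:Z * V) = U * b%:Z - a%:Z * V by ring.
    by rewrite hUV normr1.
  - by rewrite divpt_frac // mul1r hn PoszM [(a%:Z * _)]mulrC frac_scale.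
  - by rewrite divpt_frac // mul1r hn PoszM frac_scale.
move: G => [A [B [C [D [hd [hC hcase]]]]]].
have [cBD cAC] := det_coprime hd.
rewrite mobius0 mobiusI in hcase.
have bad : forall m : nat, (1 < m)%N -> n = (m * (n %/ m))%N -> True by [].
case: hcase => [[_ hy]|[_ hy]].
- have := frac_den_abs cVb cAC hy.
  move: hC; rewrite dvdzE => hC /(congr1 (fun z : int => absz z)) /= hCb.
  move: hC; rewrite -hCb /= => hdv.
  have := dvdn_leq (ltnW b1) hdv; rewrite hn; nia.
- have := frac_den_abs cUa cAC hy.
  move: hC; rewrite dvdzE => hC /(congr1 (fun z : int => absz z)) /= hCb.
  move: hC; rewrite -hCb /= => hdv.
  have := dvdn_leq (ltnW a1) hdv; rewrite hn; nia.
Qed.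

Theorem corollary3p9 (n : nat) (hn : (0 < n)%N) :
  (forall x y : qpt, gamma0_edge n x y ->
     farey_edge x y /\ scaled_farey_edge n x y) /\
  ((forall x y : qpt,
      gamma0_edge n x y <-> (farey_edge x y /\ scaled_farey_edge n x y)) <->
   (exists p l : nat, prime p /\ n = (p ^ l)%N)).
Proof.
split; first by move=> x y; exact: part1.
split.
- move=> H; apply: NNPP => hpp.
  have [a [b [a1 b1 cab hab]]] := notpp hn hpp.
  exact: (counter a1 b1 cab hab H).
- move=> [P [l [pP hnl]]] x y; split; first exact: part1.
  by move=> [f s]; exact: (part2 hn pP hnl).
Qed.
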